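(* Let $f(x)=\frac1n\sum_{i=1}^n f_i(x)$ on $\mathbb{R}^d$, where each $f_i$ is convex and $L$-smooth, and let $\mathcal X^\star$ (assumed nonempty) be the set of minimizers of $f$. Consider the following algorithm (Acc-SVRG-G) with parameters $\tau_k\in(0,1)$, $p_k\in(0,1]$: set $z_0=\tilde x_0=x_0$, $\alpha_k=\frac{L\tau_k}{1-\tau_k}$, and for $k=0,1,\dots$: $y_k=\tau_kz_k+(1-\tau_k)\big(\tilde x_k-\frac1L\nabla f(\tilde x_k)\big)$; $z_{k+1}=\arg\min_x\{\langle\mathcal G_k,x\rangle+\frac{\alpha_k}{2}\|x-z_k\|^2\}$, where $\mathcal G_k=\nabla f_{i_k}(y_k)-\nabla f_{i_k}(\tilde x_k)+\nabla f(\tilde x_k)$ with $i_k$ sampled uniformly from $\{1,\dots,n\}$ independently of the past; $\tilde x_{k+1}=y_k$ with probability $p_k$ and $\tilde x_{k+1}=\tilde x_k$ with probability $1-p_k$. Then for every $k\ge0$ and every $x^\star\in\mathcal X^\star$, $$\frac{1-\tau_k}{\tau_k^2p_k}\mathbb E[f(\tilde x_{k+1})-f(x^\star)]+\frac L2\mathbb E\|z_{k+1}-x^\star\|^2+\frac{(1-\tau_k)^2}{2L\tau_k^2}\mathbb E\|\nabla f(\tilde x_k)\|^2\le\frac{(1-\tau_kp_k)(1-\tau_k)}{\tau_k^2p_k}\mathbb E[f(\tilde x_k)-f(x^\star)]+\frac L2\mathbb E\|z_k-x^\star\|^2,$$ where $\mathbb E$ is the total expectation.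
   Context: $L$-smooth means $\|\nabla f_i(x)-\nabla f_i(y)\|\le L\|x-y\|$ for all $x,y$; norms are Euclidean. *)

(* Defs.v *)
From HB Require Import structures.
From mathcomp Require Import all_boot all_order all_algebra.
From mathcomp Require Import all_classical all_reals all_analysis.
Set Implicit Arguments. Unset Strict Implicit. Unset Printing Implicit Defensive.
Import Order.TTheory GRing.Theory Num.Theory.
Import numFieldNormedType.Exports.
Local Open Scope ring_scope.

Section Defs.
Variables (R : realType) (d : nat).
Notation vec := 'rV[R]_d.

Definition dotv (u v : vec) : R := \sum_(i < d) u 0 i * v 0 i.
Definition sqnorm (v : vec) : R := dotv v v.
Definition enorm (v : vec) : R := Num.sqrt (sqnorm v).

Definition is_gradient (f : vec -> R) (g : vec -> vec) : Prop :=
  forall x, differentiable f x /\ forall v, ('d f x : vec -> R) v = dotv (g x) v.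

Definition convex_fun (f : vec -> R) : Prop :=
  forall (x y : vec) (t : R), 0 <= t <= 1 ->
    f (t *: x + (1 - t) *: y) <= t * f x + (1 - t) * f y.

Definition L_smooth_grad (L : R) (g : vec -> vec) : Prop :=
  forall x y, enorm (g x - g y) <= L * enorm (x - y).

Variables (n : nat) (L : R) (tau p : nat -> R) (g : 'I_n -> vec -> vec).

Definition fullgrad (x : vec) : vec := n%:R^-1 *: \sum_(i < n) g i x.

(* one step k: state = (xtilde_k, z_k); random choice c = (i_k, coin_k),
   coin_k = true means xtilde_{k+1} = y_k (probability p_k). *)
Definition acc_step (k : nat) (s : vec * vec) (c : 'I_n * bool) : vec * vec :=
  let xt := s.1 in let z := s.2 in
  let y := tau k *: z + (1 - tau k) *: (xt - L^-1 *: fullgrad xt) in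
  let G := g c.1 y - g c.1 xt + fullgrad xt in
  let alpha := L * tau k / (1 - tau k) in
  (* z_{k+1} = argmin_x <G,x> + alpha/2 ||x - z||^2 = z - G/alpha *)
  let z' := z - alpha^-1 *: G in
  let xt' := if c.2 then y else xt in
  (xt', z').

Fixpoint acc_run (k : nat) (cs : seq ('I_n * bool)) (s : vec * vec) : vec * vec :=
  if cs is c :: cs' then acc_run k.+1 cs' (acc_step k s c) else s.

(* (xtilde_j, z_j) as a function of the sample path t of length K >= j *)
Definition acc_state (x0 : vec) (K j : nat) (t : K.-tuple ('I_n * bool)) :=
  acc_run 0 (take j t) (x0, x0).

(* probability of a sample path of length K: i_j uniform on 'I_n,
   coin_j Bernoulli(p_j), all mutually independent *)
Definition path_prob (K : nat) (t : K.-tuple ('I_n * bool)) : R :=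
  \prod_(j < K) (n%:R^-1 * (if (tnth t j).2 then p j else 1 - p j)).

Definition Expect (K : nat) (F : K.-tuple ('I_n * bool) -> R) : R :=
  \sum_(t : K.-tuple ('I_n * bool)) path_prob t * F t.

End Defs.

(* Main.v *)
Require Import Defs.
From HB Require Import structures.
From mathcomp Require Import all_boot all_order all_algebra.
From mathcomp Require Import all_classical all_reals all_analysis.
From mathcomp Require Import ring lra.
Import Order.TTheory GRing.Theory Num.Theory.
Local Open Scope ring_scope.

Module Aux.
Import numFieldNormedType.Exports.
Local Open Scope ring_scope.
Section S.
Variables (R : realType) (d : nat).
Notation vec := 'rV[R]_d.
Lemma line_deriv (f : vec -> R) g (Hg : is_gradient f g) (x h : vec) (t : R) :
  is_derive t 1 (fun s : R => f (x + s *: h)) (dotv (g (x + t *: h)) h).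
Proof.
have [df dfE] := Hg (x + t *: h).
have dh := @diff_derivable _ _ _ _ _ h df.
have Dh := @deriveE _ _ _ _ _ h df.
have E : (fun s : R => s^-1 *: (((fun s => f (x + s*:h)) \o shift t) (s *: 1) - f (x + t*:h))) = (fun s => s^-1 *: ((f \o shift (x + t*:h)) (s *: h) - f (x + t*:h))).
  apply/funext => s /=; congr (_ *: (f _ - _)).
  by rewrite [s%:A]mulr1 scalerDl addrCA addrC.
split; first by rewrite /derivable E.
by rewrite /derive E -/(derive _ _ _) Dh dfE.
Qed.

Lemma dotvC (u v : vec) : dotv u v = dotv v u.
Proof. by apply: eq_bigr => i _; rewrite mulrC. Qed.
Lemma dotvDl (u v w : vec) : dotv (u + v) w = dotv u w + dotv v w.
Proof. by rewrite /dotv -big_split; apply: eq_bigr => i _; rewrite mxE mulrDl. Qed.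
Lemma dotvZl a (u w : vec) : dotv (a *: u) w = a * dotv u w.
Proof. by rewrite /dotv mulr_sumr; apply: eq_bigr => i _; rewrite mxE mulrA. Qed.
Lemma dotvNl (u w : vec) : dotv (- u) w = - dotv u w.
Proof. by rewrite -scaleN1r dotvZl mulN1r. Qed.
Lemma dotvBl (u v w : vec) : dotv (u - v) w = dotv u w - dotv v w.
Proof. by rewrite dotvDl dotvNl. Qed.
Lemma dotvDr (u v w : vec) : dotv w (u + v) = dotv w u + dotv w v.
Proof. by rewrite dotvC dotvDl !(dotvC w). Qed.
Lemma dotvZr a (u w : vec) : dotv w (a *: u) = a * dotv w u.
Proof. by rewrite dotvC dotvZl dotvC. Qed.
Lemma dotvNr (u w : vec) : dotv w (- u) = - dotv w u.
Proof. by rewrite dotvC dotvNl dotvC. Qed.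
Lemma dotvBr (u v w : vec) : dotv w (u - v) = dotv w u - dotv w v.
Proof. by rewrite dotvDr dotvNr. Qed.
Lemma dotv0l (w : vec) : dotv 0 w = 0.
Proof. by rewrite -(scale0r (0:vec)) dotvZl mul0r. Qed.
Lemma dotv_suml m (F : 'I_m -> vec) w : dotv (\sum_(i < m) F i) w = \sum_(i < m) dotv (F i) w.
Proof.
elim: m F => [|m IH] F; first by rewrite !big_ord0 dotv0l.
by rewrite !big_ord_recr /= dotvDl IH.
Qed.
Lemma sqnorm_ge0 (v : vec) : 0 <= sqnorm v.
Proof. by apply: sumr_ge0 => i _; rewrite -expr2 sqr_ge0. Qed.
Lemma enorm_sq (v : vec) : enorm v ^+ 2 = sqnorm v.
Proof. by rewrite /enorm sqr_sqrtr // sqnorm_ge0. Qed.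

Lemma sqnormB (u v : vec) : sqnorm (u - v) = sqnorm u - 2 * dotv u v + sqnorm v.
Proof.
rewrite /sqnorm dotvBl !dotvBr (dotvC v u); lra.
Qed.

Lemma smooth_sq L (g : vec -> vec) : L_smooth_grad L g -> 0 <= L ->
  forall x y, sqnorm (g x - g y) <= L ^+ 2 * sqnorm (x - y).
Proof.
move=> Hs L0 x y; rewrite -!enorm_sq -exprMn; apply: lerXn2r.
- by rewrite nnegrE /enorm sqrtr_ge0.
- by rewrite nnegrE mulr_ge0 // /enorm sqrtr_ge0.
- exact: Hs.
Qed.

Lemma dot_bound (u h : vec) c : 0 < c -> sqnorm u <= c ^+ 2 * sqnorm h ->
  dotv u h <= c * sqnorm h.
Proof.
move=> c0 Hu.
have H := sqnorm_ge0 (u - c *: h).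
rewrite sqnormB dotvZr /sqnorm dotvZl dotvZr -/(sqnorm h) -/(sqnorm u) in H.
have : 2 * c * dotv u h <= 2 * c * (c * sqnorm h) by nra.
by rewrite ler_pM2l // mulr_gt0.
Qed.

Lemma descent (f : vec -> R) g (L : R) (Hg : is_gradient f g) (L0 : 0 < L)
  (Hs : L_smooth_grad L g) (x h : vec) :
  f (x + h) <= f x + dotv (g x) h + L / 2 * sqnorm h.
Proof.
set c := dotv (g x) h; set e := L / 2 * sqnorm h.
pose psi := (fun s : R => f (x + s *: h)) - (c \*: (@id R)) - (e \*: ((@id R) * (@id R))).
have Dphi (s : R) := @line_deriv f g Hg x h s.
have Did (s : R) : is_derive s (1:R) (@id R) 1 := is_derive_id s 1.
have Dc (s : R) := is_deriveZ c (Did s).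
have Dq (s : R) := is_deriveM (Did s) (Did s).
have D (s : R) := is_deriveB (is_deriveB (Dphi s) (Dc s)) (is_deriveZ e (Dq s)).
have := @ler0_derive1_nincr R psi 0 1.
move=> /(_ _ _ _ 0 1 (lexx 0) ler01 (lexx 1)).
have -> : psi 1 = f (x + h) - c - e.
  by rewrite /psi !fctE /= scale1r [c%:A]mulr1 mulr1 [e *: 1]mulr1.
have -> : psi 0 = f x.
  by rewrite /psi !fctE /= scale0r addr0 mulr0 !scaler0 !subr0.
move=> H; have : f (x + h) - c - e <= f x; last by lra.
apply: H.
- by move=> s _; exact: ex_derive.
- move=> s; rewrite in_itv /= => /andP[s0 s1]; rewrite derive1E derive_val.
  have Hb := @dot_bound (g (x + s *: h) - g x) h (L * s) (mulr_gt0 L0 s0).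
  have Hsq := @smooth_sq L g Hs (ltW L0) (x + s *: h) x.
  rewrite addrAC subrr add0r /sqnorm dotvZl dotvZr -/(sqnorm h) in Hsq.
  rewrite dotvBl exprMn -/(sqnorm (g (x + s *: h) - g x)) in Hb.
  rewrite -/(sqnorm (g (x + s *: h) - g x)) (_ : L ^+ 2 * (s * (s * sqnorm h)) = L ^+ 2 * s ^+ 2 * sqnorm h) in Hsq; last by rewrite expr2 !mulrA.
  have := Hb (le_trans Hsq (le_refl _)).
  rewrite /c /e /= ![_%:A]mulr1 => Hb'.
  have -> : L / 2 * sqnorm h *: (s + s) = L * s * sqnorm h.
    by change (L / 2 * sqnorm h * (s + s) = L * s * sqnorm h); field.
  lra.
- apply: continuous_subspaceT => s; apply: differentiable_continuous.
  by rewrite -derivable1_diffP; exact: ex_derive.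
Qed.

Lemma convex_grad (f : vec -> R) g (Hg : is_gradient f g) (Hc : convex_fun f) (x y : vec) :
  f y + dotv (g y) (x - y) <= f x.
Proof.
set h := x - y.
have D := @line_deriv f g Hg y h 0.
rewrite scale0r addr0 in D.
have C := @ex_derive _ _ _ _ _ _ _ D.
have E := @derive_val _ _ _ _ _ _ _ D; rewrite /derive in E.
rewrite /derivable E in C.
have C' := cvg_dnbhs_at_right C.
suff : dotv (g y) h <= f x - f y by lra.
apply: (cvgr_to_le C').
near=> s.
have s0 : 0 < s by near: s; exact: nbhs_right_gt.
have s1 : s <= 1 by near: s; exact: nbhs_right_le.
rewrite /= addr0 scale0r addr0 [s%:A]mulr1.
have Hs := Hc x y s; rewrite ltW //= s1 in Hs.
have -> : y + s *: h = s *: x + (1 - s) *: y.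
  by rewrite /h scalerBr scalerBl scale1r addrCA.
have Hs' := Hs isT.
rewrite ler_pdivrMl // -subr_ge0.
change (0 <= s * (f x - f y) - (f (s *: x + (1 - s) *: y) - f y)).
lra.
Unshelve. all: by end_near.
Qed.

Lemma cocoercive (f : vec -> R) g (L : R) (Hg : is_gradient f g) (Hc : convex_fun f)
  (L0 : 0 < L) (Hs : L_smooth_grad L g) (x y : vec) :
  f y + dotv (g y) (x - y) + L^-1 / 2 * sqnorm (g x - g y) <= f x.
Proof.
set u := x - L^-1 *: (g x - g y).
have H1 := @convex_grad f g Hg Hc u y.
have H2 := @descent f g L Hg L0 Hs x (- (L^-1 *: (g x - g y))).
rewrite -/(x - _) -/u in H2.
have E1 : u - y = (x - y) - L^-1 *: (g x - g y).
  by rewrite /u addrAC.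
rewrite E1 dotvBr dotvZr in H1.
rewrite dotvNr dotvZr /sqnorm dotvNl dotvNr opprK dotvZl dotvZr -/(sqnorm _) in H2.
have E2 : dotv (g x) (g x - g y) = dotv (g y) (g x - g y) + sqnorm (g x - g y).
  by rewrite /sqnorm dotvBl; ring.
rewrite E2 in H2.
have Hn := sqnorm_ge0 (g x - g y).
set q := sqnorm (g x - g y) in H2 Hn E2 *.
set a := dotv (g y) (g x - g y) in H1 H2 E2.
have -> : L^-1 / 2 * q = L^-1 * q - L / 2 * (L^-1 * (L^-1 * q)).
  by field; rewrite gt_eqF.
lra.
Qed.
End S.

Section Exp.
Variables (R : realType) (d n : nat) (L : R) (tau p : nat -> R)
  (g : 'I_n -> 'rV[R]_d -> 'rV[R]_d).
Notation C := ('I_n * bool)%type.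

Definition wgt (k : nat) (c : C) : R := n%:R^-1 * (if c.2 then p k else 1 - p k).

Lemma acc_run_rcons k0 (s : seq C) c st :
  acc_run L tau g k0 (rcons s c) st = acc_step L tau g (k0 + size s) (acc_run L tau g k0 s st) c.
Proof.
elim: s k0 st => [|c' s IH] k0 st /=; first by rewrite addn0.
by rewrite IH addSnnS.
Qed.

Lemma state_last x0 k (t : k.-tuple C) c :
  acc_state L tau g x0 k.+1 [tuple of rcons t c] = acc_step L tau g k (acc_state L tau g x0 k t) c.
Proof.
rewrite /acc_state /= take_oversize ?size_rcons ?size_tuple //.
by rewrite acc_run_rcons take_oversize ?size_tuple.
Qed.

Lemma state_prev x0 k (t : k.-tuple C) c :
  acc_state L tau g x0 k [tuple of rcons t c] = acc_state L tau g x0 k t.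
Proof.
by rewrite /acc_state /= -cats1 take_size_cat ?size_tuple // take_oversize ?size_tuple.
Qed.

Lemma path_prob_rcons k (t : k.-tuple C) c :
  path_prob p [tuple of rcons t c] = path_prob p t * wgt k c.
Proof.
rewrite /path_prob big_ord_recr /=.
have Ht : forall j : 'I_k, tnth [tuple of rcons t c] (widen_ord (leqnSn k) j) = tnth t j.
  by move=> j; rewrite !(tnth_nth c) /= nth_rcons size_tuple ltn_ord.
have Hl : tnth [tuple of rcons t c] ord_max = c.
  by rewrite (tnth_nth c) /= nth_rcons size_tuple ltnn eqxx.
rewrite Hl /wgt; congr (_ * _); apply: eq_bigr => j _.
by rewrite -Ht.
Qed.

Lemma Expect_step k (F : k.+1.-tuple C -> R) :
  Expect p F = \sum_(t : k.-tuple C) path_prob p t * \sum_(c : C) (wgt k c * F [tuple of rcons t c]).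
Proof.
rewrite /Expect.
under [RHS]eq_bigr => t _ do rewrite mulr_sumr.
rewrite pair_big /=.
rewrite (reindex (fun pr : k.-tuple C * C => [tuple of rcons pr.1 pr.2])) /=.
  by apply: eq_bigr => -[t c] _ /=; rewrite path_prob_rcons mulrA.
exists (fun t : k.+1.-tuple C => ([tuple of belast (thead t) (behead t)], last (thead t) (behead t))).
  move=> [t c] _ /=.
  set u := [tuple of rcons t c].
  have E : rcons (belast (thead u) (behead u)) (last (thead u) (behead u)) = rcons t c.
    by rewrite -lastI; move: (congr1 val (tuple_eta u)) => /= <-.
  case: (rcons_inj E) => E1 E2.
  by congr (_, _) => //; apply: val_inj.
move=> t _ /=; apply: val_inj => /=.
by rewrite -lastI; move: (congr1 val (tuple_eta t)) => /= <-.
Qed.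


Lemma sum_pair (G : C -> R) : \sum_(c : C) G c = \sum_(i < n) (G (i, true) + G (i, false)).
Proof.
transitivity (\sum_(i < n) \sum_(b : bool) G (i, b)); last first.
  by apply: eq_bigr => i _; rewrite big_bool.
by rewrite pair_big /=; apply: eq_bigr => -[i b] _.
Qed.

Lemma sum_wgt_const k (X : R) : (0 < n)%N -> \sum_(c : C) (wgt k c * X) = X.
Proof.
move=> n0; rewrite sum_pair /wgt /= sumr_const card_ord -mulr_natr.
have nz : n%:R != 0 :> R by rewrite pnatr_eq0 -lt0n.
by field.
Qed.

Lemma corr_zero (xt u : 'rV[R]_d) : (0 < n)%N ->
  \sum_(i < n) dotv (g i xt - fullgrad g xt) u = 0.
Proof.
move=> n0.
rewrite (eq_bigr (fun i => dotv (g i xt) u - dotv (fullgrad g xt) u)); last first.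
  by move=> i _; rewrite dotvBl.
rewrite sumrB -dotv_suml sumr_const card_ord /fullgrad dotvZl -mulr_natr.
have nz : n%:R != 0 :> R by rewrite pnatr_eq0 -lt0n.
by field.
Qed.

End Exp.


Lemma per_i (R : realType) (d : nat) (L : R) (fi : 'rV[R]_d -> R) (gi : 'rV[R]_d -> 'rV[R]_d)
  (tk qk : R) (xstar xt z gt : 'rV[R]_d) :
  0 < L -> convex_fun fi -> is_gradient fi gi -> L_smooth_grad L gi ->
  0 < tk < 1 -> 0 < qk <= 1 ->
  let y := tk *: z + (1 - tk) *: (xt - L^-1 *: gt) in
  let al := L * tk / (1 - tk) in
  (1 - tk) / (tk ^+ 2 * qk) * (qk * (fi y - fi xstar) + (1 - qk) * (fi xt - fi xstar))
  + L / 2 * sqnorm (z - al^-1 *: (gi y - gi xt + gt) - xstar)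
  + (1 - tk) ^+ 2 / (2 * L * tk ^+ 2) * sqnorm gt
  <= (1 - tk * qk) * (1 - tk) / (tk ^+ 2 * qk) * (fi xt - fi xstar)
  + L / 2 * sqnorm (z - xstar)
  + L / 2 * dotv (gi xt - gt) ((2 * al^-1) *: (z - xstar) - (2 * (al^-1 * al^-1)) *: gt).
Proof.
move=> L0 Hc Hg Hs /andP[t0 t1] /andP[q0 q1]; cbv zeta.
set y := tk *: z + (1 - tk) *: (xt - L^-1 *: gt).
set al := L * tk / (1 - tk).
have F1 := @convex_grad R d fi gi Hg Hc xstar y.
have F2 := @cocoercive R d fi gi L Hg Hc L0 Hs xt y.
move: F1 F2.
set a := gi y; set b := gi xt.
rewrite /al /y /sqnorm.
rewrite !(dotvDl, dotvDr, dotvBl, dotvBr, dotvZl, dotvZr, dotvNl, dotvNr).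
rewrite ?(@dotvC _ _ b a) ?(@dotvC _ _ gt a) ?(@dotvC _ _ z a) ?(@dotvC _ _ xt a) ?(@dotvC _ _ xstar a)
  ?(@dotvC _ _ gt b) ?(@dotvC _ _ z b) ?(@dotvC _ _ xt b) ?(@dotvC _ _ xstar b)
  ?(@dotvC _ _ z gt) ?(@dotvC _ _ xt gt) ?(@dotvC _ _ xstar gt)
  ?(@dotvC _ _ xt z) ?(@dotvC _ _ xstar z) ?(@dotvC _ _ xstar xt).
move=> F1 F2; rewrite -subr_ge0; rewrite -subr_ge0 in F1; rewrite -subr_ge0 in F2.
have tn : tk != 0 by rewrite gt_eqF.
have qn : qk != 0 by rewrite gt_eqF.
have Ln : L != 0 by rewrite gt_eqF.
have t1n : 1 - tk != 0 by rewrite gt_eqF // subr_gt0.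
match goal with
| F1 : is_true (0 <= ?s1), F2 : is_true (0 <= ?s2) |- is_true (0 <= ?e) =>
  have -> : e = (1 - tk) / tk ^+ 2 * (tk * s1 + (1 - tk) * s2)
end.
  by field; rewrite Ln tn t1n qn.
apply: mulr_ge0.
  by apply: divr_ge0; [lra | apply: exprn_ge0; lra].
apply: addr_ge0; apply: mulr_ge0 => //; lra.
Qed.

Lemma step_ineq (R : realType) (d n : nat) (L : R) (fi : 'I_n -> 'rV[R]_d -> R)
  (g : 'I_n -> 'rV[R]_d -> 'rV[R]_d) (tau p : nat -> R) (xstar : 'rV[R]_d) (k : nat)
  (f : 'rV[R]_d -> R) :
  (0 < n)%N -> 0 < L -> (forall i, convex_fun (fi i)) -> (forall i, is_gradient (fi i) (g i)) ->
  (forall i, L_smooth_grad L (g i)) -> 0 < tau k < 1 -> 0 < p k <= 1 ->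
  (forall x, f x = n%:R^-1 * \sum_(i < n) fi i x) ->
  forall (s : 'rV[R]_d * 'rV[R]_d) (S1 S0 : 'I_n * bool -> 'rV[R]_d * 'rV[R]_d),
  (forall c, S1 c = acc_step L tau g k s c) -> (forall c, S0 c = s) ->
  (1 - tau k) / (tau k ^+ 2 * p k) * \sum_c (wgt R n p k c * (f (S1 c).1 - f xstar))
  + L / 2 * \sum_c (wgt R n p k c * sqnorm ((S1 c).2 - xstar))
  + (1 - tau k) ^+ 2 / (2 * L * tau k ^+ 2) * \sum_c (wgt R n p k c * sqnorm (fullgrad g (S0 c).1))
  <= (1 - tau k * p k) * (1 - tau k) / (tau k ^+ 2 * p k) * \sum_c (wgt R n p k c * (f (S0 c).1 - f xstar))
  + L / 2 * \sum_c (wgt R n p k c * sqnorm ((S0 c).2 - xstar)).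
Proof.
move=> n0 L0 Hc Hg Hs Ht Hp Hf s S1 S0 H1 H0.
have nz : n%:R != 0 :> R by rewrite pnatr_eq0 -lt0n.
set xt := s.1; set z := s.2; set gt := fullgrad g xt.
set y := tau k *: z + (1 - tau k) *: (xt - L^-1 *: gt).
set al := L * tau k / (1 - tau k).
have Hst : forall c, S1 c = (if c.2 then y else xt, z - al^-1 *: (g c.1 y - g c.1 xt + gt)).
  by move=> c; rewrite H1.
have E1 : \sum_c (wgt R n p k c * (f (S1 c).1 - f xstar))
    = p k * (f y - f xstar) + (1 - p k) * (f xt - f xstar).
  rewrite sum_pair; under eq_bigr => i _ do rewrite !Hst.
  by rewrite /wgt /= sumr_const card_ord -mulr_natr; field.
have E2 : \sum_c (wgt R n p k c * sqnorm ((S1 c).2 - xstar))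
    = n%:R^-1 * \sum_(i < n) sqnorm (z - al^-1 *: (g i y - g i xt + gt) - xstar).
  rewrite sum_pair mulr_sumr; apply: eq_bigr => i _; rewrite !Hst /wgt /=; ring.
have E3 : \sum_c (wgt R n p k c * sqnorm (fullgrad g (S0 c).1)) = sqnorm gt.
  rewrite (eq_bigr (fun c => wgt R n p k c * sqnorm gt)); first exact: sum_wgt_const.
  by move=> c _; rewrite H0.
have E4 : \sum_c (wgt R n p k c * (f (S0 c).1 - f xstar)) = f xt - f xstar.
  rewrite (eq_bigr (fun c => wgt R n p k c * (f xt - f xstar))); first exact: sum_wgt_const.
  by move=> c _; rewrite H0.
have E5 : \sum_c (wgt R n p k c * sqnorm ((S0 c).2 - xstar)) = sqnorm (z - xstar).
  rewrite (eq_bigr (fun c => wgt R n p k c * sqnorm (z - xstar))); first exact: sum_wgt_const.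
  by move=> c _; rewrite H0.
rewrite E1 E2 E3 E4 E5.
have Hi i := @per_i R d L (fi i) (g i) (tau k) (p k) xstar xt z gt L0 (Hc i) (Hg i) (Hs i) Ht Hp.
have Hsum := @ler_sum _ _ (index_enum 'I_n) xpredT _ _ (fun i _ => Hi i).
rewrite !big_split /= -!mulr_sumr !big_split /= -!mulr_sumr !sumrB !sumr_const !card_ord in Hsum.
rewrite sumrN (@corr_zero R d n g xt _ n0) mulr0 addr0 -(mulr_natr (sqnorm gt)) -(mulr_natr (sqnorm (z - xstar))) in Hsum.
rewrite !Hf /y /al.
have [t0 t1] := andP Ht; have [q0 q1] := andP Hp.
have tn : tau k != 0 by rewrite gt_eqF.
have qn : p k != 0 by rewrite gt_eqF.
have Ln : L != 0 by rewrite gt_eqF.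
have t1n : 1 - tau k != 0 by rewrite gt_eqF // subr_gt0.
move: Hsum.
match goal with
| |- is_true (?l' <= ?r') -> is_true (?l <= ?r) =>
  rewrite (_ : l = n%:R^-1 * l'); [idtac | by field; rewrite ?nz ?tn ?qn ?Ln ?t1n]
end.
match goal with
| |- is_true (?l' <= ?r') -> is_true (_ <= ?r) =>
  rewrite [X in _ -> _ <= X](_ : r = n%:R^-1 * r'); [idtac | by field; rewrite ?nz ?tn ?qn ?Ln ?t1n]
end.
by move=> H; apply: ler_wpM2l => //; rewrite invr_ge0 ler0n.
Qed.

End Aux.
Import Aux.

Theorem proposition2 (R : realType) (d n : nat) (L : R)
  (fi : 'I_n -> 'rV[R]_d -> R) (g : 'I_n -> 'rV[R]_d -> 'rV[R]_d)
  (tau p : nat -> R) (x0 xstar : 'rV[R]_d) :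
  (0 < n)%N -> 0 < L ->
  (forall i, convex_fun (fi i)) ->
  (forall i, is_gradient (fi i) (g i)) ->
  (forall i, L_smooth_grad L (g i)) ->
  (forall j, 0 < tau j < 1) ->
  (forall j, 0 < p j <= 1) ->
  let f := fun x => n%:R^-1 * \sum_(i < n) fi i x in
  (forall x, f xstar <= f x) ->
  forall k : nat,
  let E := @Expect R n p k.+1 in
  let xt := fun j t => (acc_state L tau g x0 j t).1 in
  let z := fun j t => (acc_state L tau g x0 j t).2 in
  (1 - tau k) / (tau k ^+ 2 * p k) * E (fun t => f (xt k.+1 t) - f xstar)
  + L / 2 * E (fun t => sqnorm (z k.+1 t - xstar))
  + (1 - tau k) ^+ 2 / (2 * L * tau k ^+ 2) * E (fun t => sqnorm (fullgrad g (xt k t)))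
  <= (1 - tau k * p k) * (1 - tau k) / (tau k ^+ 2 * p k) * E (fun t => f (xt k t) - f xstar)
  + L / 2 * E (fun t => sqnorm (z k t - xstar)).
Proof.
intros n0 L0 Hc Hg Hs Ht Hp f Hmin k; cbv zeta.
rewrite !Expect_step !mulr_sumr -!big_split /=.
apply: ler_sum => t _.
rewrite !(mulrCA _ (path_prob p t)) -!mulrDr; apply: ler_wpM2l.
  rewrite /path_prob; apply: prodr_ge0 => j _; apply: mulr_ge0.
    by rewrite invr_ge0 ler0n.
  by have /andP[? ?] := Hp j; case: ifP => _; lra.
have := @step_ineq R d n L fi g tau p xstar k f n0 L0 Hc Hg Hs (Ht k) (Hp k) (fun x => erefl)
  (acc_state L tau g x0 k t)
  (fun c => acc_state L tau g x0 k.+1 [tuple of rcons t c])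
  (fun c => acc_state L tau g x0 k [tuple of rcons t c])
  (fun c => @state_last R d n L tau g x0 k t c)
  (fun c => @state_prev R d n L tau g x0 k t c).
by [].
Qed.
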